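(* Let $\iota:\mathcal{S}_\bullet\to\mathcal{T}_\bullet$ be the linear map sending $\sigma\in S_n$ to the set composition $(\{\sigma(1)\},\ldots,\{\sigma(n)\})\in\mathsf{Comp}_n$. Then $\iota$ is an injective morphism of Hopf algebras $(\mathcal{S}_\bullet,\times,\hat{\delta})\to(\mathcal{T}_\bullet,\overline{\ast},\hat{\delta})$ (an embedding of enveloping algebras), and it is also an injective morphism of Hopf algebras from the Malvenuto–Reutenauer Hopf algebra $(\mathcal{S}_\bullet,\ast,\overline{\delta})$ into $(\mathcal{T}_\bullet,\hat{\ast},\overline{\delta})$.
   Context: $[n]=\{1,\ldots,n\}$; $\mathcal{S}_\bullet=\bigoplus_{n\ge0}\mathbb{Z}[S_n]$, a permutation $\sigma\in S_n$ being identified with the word $(\sigma(1),\ldots,\sigma(n))$. For a word $w$ in distinct positive integers and a set $A$, $w|_A$ is the subsequence of letters in $A$, and $\mathsf{is}_A$ standardizes (replaces letters by their ranks). On $\mathcal{S}_\bullet$: $(\alpha\times\beta)(i)=\alpha(i)$ for $i\le n$ and $n+\beta(i-n)$ for $i>n$ ($\alpha\in S_n$, $\beta\in S_m$); $\hat{\delta}(\alpha)=\sum_{S\sqcup T=[n]}\mathsf{is}_S(\alpha|_S)\otimes\mathsf{is}_T(\alpha|_T)$; $\alpha\ast\beta=q_{(n,m)}\cdot(\alpha\times\beta)$ (product in $\mathbb{Z}[S_{n+m}]$), where $q_{(n,m)}$ is the sum of all $\pi\in S_{n+m}$ with $\pi(1)<\cdots<\pi(n)$ and $\pi(n+1)<\cdots<\pi(n+m)$;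 $\overline{\delta}(\alpha)=\sum_{i=0}^n\alpha|_{[i]}\otimes\mathsf{is}_{\{i+1,\ldots,n\}}(\alpha|_{\{i+1,\ldots,n\}})$. Set compositions: a set composition of a finite $S\subset\mathbb{N}$ is a tuple of pairwise disjoint non-empty subsets with union $S$; $\mathsf{Comp}_n$ is the set of those of $[n]$; $\mathcal{T}_\bullet=\bigoplus_n\mathbb{Z}[\mathsf{Comp}_n]$. $\mathsf{is}_{S,T}$ relabels blockwise by the order-preserving bijection $S\to T$, $\mathsf{is}_S=\mathsf{is}_{S,[|S|]}$; $P|_A=\mathsf{is}_A((P_1\cap A,\ldots,P_k\cap A)^\#)$, $^\#$ deleting empty entries; $\ast$ is concatenation of tuples on disjoint ground sets. For $P=(P_1,\ldots,P_k)\in\mathsf{Comp}_p$, $Q=(Q_1,\ldots,Q_l)\in\mathsf{Comp}_q$: $P\,\overline{\ast}\,Q=(P_1,\ldots,P_k,p+Q_1,\ldots,p+Q_l)$ with $p+X=\{p+x\}$; $P\,\hat{\ast}\,Q=\sum_{A\sqcup B=[p+q],|A|=p}\mathsf{is}_{[p],A}(P)\ast\mathsf{is}_{[q],B}(Q)$. For $P\in\mathsf{Comp}_n$: $\hat{\delta}(P)=\sum_{A\sqcup B=[n]}P|_A\otimes P|_B$, $\overline{\delta}(P)=\sum_{p+q=n}P|_{[p]}\otimes P|_{\{p+1,\ldots,n\}}$. *)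

(* Defs.v *)
From HB Require Import structures.
From mathcomp Require Import all_boot all_order all_algebra.
From mathcomp Require Import finmap.
From mathcomp.multinomials Require Import freeg.

Set Implicit Arguments.
Unset Strict Implicit.
Unset Printing Implicit Defensive.

Import Order.TTheory GRing.Theory Num.Theory.
Local Open Scope fset_scope.

(* The free Z-module on a basis K is {freeg K / int}; the tensor       *)
(* product of free modules on bases K1, K2 is the free module on       *)
(* K1 * K2.                                                            *)

Definition FZ (K : choiceType) := {freeg K / int}.

Definition bas (K : choiceType) (k : K) : FZ K := << k >>.

Definition lin (K1 K2 : choiceType) (f : K1 -> FZ K2) (x : FZ K1) : FZ K2 :=
  fglift f x.

Definition bilin (K1 K2 K3 : choiceType) (m : K1 -> K2 -> FZ K3)
  (x : FZ K1) (y : FZ K2) : FZ K3 :=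
  fglift (fun a => fglift (fun b => m a b) y) x.

Definition tens (K1 K2 L1 L2 : choiceType) (f : K1 -> FZ L1) (g : K2 -> FZ L2)
  (t : FZ (K1 * K2)%type) : FZ (L1 * L2)%type :=
  fglift (fun p => bilin (fun a b => bas (a, b)) (f p.1) (g p.2)) t.

Definition fint (a k : nat) : {fset nat} := [fset i | i in iota a k].
Definition fiota (n : nat) : {fset nat} := fint 1 n.

(* rank of x in the finite set A (1-based for x \in A): this is the    *)
(* order-preserving bijection A -> [|A|], i.e. is_A on letters         *)
Definition rank (A : {fset nat}) (x : nat) : nat := #|` [fset y in A | y <= x]|.

(* the order-preserving bijection S -> T (for |S| = |T|) *)
Definition relab (S T : {fset nat}) (x : nat) : nat :=
  nth 0 (sort leq (enum_fset T)) (rank S x).-1.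

Definition word := seq nat.

Definition is_perm_word (w : word) : bool := perm_eq w (iota 1 (size w)).

(* S_bullet = span of all permutation words inside FZ word *)
Definition inS (x : FZ word) : Prop := all is_perm_word (dom x).

Definition wrestr (w : word) (A : {fset nat}) : word := [seq x <- w | x \in A].
Definition wis (A : {fset nat}) (w : word) : word := map (rank A) w.

Definition wcross (a b : word) : FZ word := bas (a ++ map (addn (size a)) b).

(* product in Z[S_n], with (pi tau)(i) = pi (tau i) *)
Definition wcomp (p t : word) : FZ word := bas (map (fun i => nth 0 p i.-1) t).
Definition gmul (x y : FZ word) : FZ word := bilin wcomp x y.

(* q_(n,m): sum of pi in S_(n+m) increasing on [n] and on {n+1..n+m};  *)
(* such pi is determined by A = pi([n]) *)
Definition qnm (n m : nat) : FZ word :=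
  (\sum_(A <- enum_fset (fpowerset (fiota (n + m)%N)) | #|` A| == n)
     bas (sort leq (enum_fset A) ++ sort leq (enum_fset (fiota (n + m)%N `\` A))))%R.

Definition wstar (a b : word) : FZ word :=
  gmul (qnm (size a) (size b)) (wcross a b).

Definition wdhat (a : word) : FZ (word * word)%type :=
  let n := size a in
  (\sum_(S <- enum_fset (fpowerset (fiota n)))
     bas (wis S (wrestr a S), wis (fiota n `\` S) (wrestr a (fiota n `\` S))))%R.

Definition wdbar (a : word) : FZ (word * word)%type :=
  let n := size a in
  (\sum_(0 <= i < n.+1)
     bas (wrestr a (fiota i), wis (fint i.+1 (n - i)%N) (wrestr a (fint i.+1 (n - i)%N))))%R.

Definition scomp := seq {fset nat}.

Definition cdeg (P : scomp) : nat := \sum_(B <- P) #|` B|.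

Definition crelab (S T : {fset nat}) (P : scomp) : scomp :=
  map (fun B => [fset relab S T x | x in B]) P.
Definition cis (A : {fset nat}) (P : scomp) : scomp :=
  map (fun B => [fset rank A x | x in B]) P.

Definition crestr (P : scomp) (A : {fset nat}) : scomp :=
  cis A [seq B <- map (fun B => B `&` A) P | B != fset0].

Definition cbar (P Q : scomp) : FZ scomp :=
  bas (P ++ map (fun B => [fset (cdeg P + x)%N | x in B]) Q).

Definition chat (P Q : scomp) : FZ scomp :=
  let p := cdeg P in let q := cdeg Q in
  (\sum_(A <- enum_fset (fpowerset (fiota (p + q)%N)) | #|` A| == p)
     bas (crelab (fiota p) A P ++ crelab (fiota q) (fiota (p + q)%N `\` A) Q))%R.

Definition cdhat (P : scomp) : FZ (scomp * scomp)%type :=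
  let n := cdeg P in
  (\sum_(A <- enum_fset (fpowerset (fiota n)))
     bas (crestr P A, crestr P (fiota n `\` A)))%R.

Definition cdbar (P : scomp) : FZ (scomp * scomp)%type :=
  let n := cdeg P in
  (\sum_(0 <= p < n.+1) bas (crestr P (fiota p), crestr P (fint p.+1 (n - p)%N)))%R.

Definition iota_b (w : word) : FZ scomp := bas (map (fun x => [fset x]) w).
Definition iotaL (x : FZ word) : FZ scomp := lin iota_b x.

Definition unitS : FZ word := bas [::].
Definition unitT : FZ scomp := bas [::].
Definition counitS (x : FZ word) : int := coeff [::] x.
Definition counitT (x : FZ scomp) : int := coeff [::] x.

(* Main.v *)
Require Import Defs.
From HB Require Import structures.
From mathcomp Require Import all_boot all_order all_algebra.
From mathcomp Require Import finmap.
From mathcomp.multinomials Require Import freeg.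
Set Implicit Arguments.
Unset Strict Implicit.
Unset Printing Implicit Defensive.
Import Order.TTheory GRing.Theory Num.Theory.
Local Open Scope fset_scope.
Section FG.
Local Open Scope ring_scope.

Lemma fgliftB (K : choiceType) (M : lmodType int) (f : K -> M) x y :
  fglift f (x - y) = fglift f x - fglift f y.
Proof. exact: lift_is_additive. Qed.

Lemma fglift0 (K : choiceType) (M : lmodType int) (f : K -> M) :
  fglift f 0 = 0.
Proof. by rewrite -(subrr 0) fgliftB subrr. Qed.

Lemma fgliftN (K : choiceType) (M : lmodType int) (f : K -> M) x :
  fglift f (- x) = - fglift f x.
Proof. by rewrite -sub0r fgliftB fglift0 sub0r. Qed.

Lemma fgliftD (K : choiceType) (M : lmodType int) (f : K -> M) x y :
  fglift f (x + y) = fglift f x + fglift f y.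
Proof. by rewrite -{1}[y]opprK fgliftB fgliftN opprK. Qed.

Lemma fglift_sum (K : choiceType) (M : lmodType int) (f : K -> M) (I : Type) (r : seq I) (P : pred I) (F : I -> FZ K) :
  fglift f (\sum_(i <- r | P i) F i) = \sum_(i <- r | P i) fglift f (F i).
Proof.
elim: r => [|i r IH]; first by rewrite !big_nil fglift0.
by rewrite !big_cons; case: (P i); rewrite ?fgliftD IH.
Qed.

Lemma fglift_bas (K : choiceType) (M : lmodType int) (f : K -> M) k :
  fglift f (bas k) = f k.
Proof. by rewrite /bas liftU scale1r. Qed.

Lemma fgliftMz (K : choiceType) (M : lmodType int) (f : K -> M) (c : int) x :
  fglift f (c *: x) = c *: fglift f x.
Proof.
rewrite -[c]intz !scaler_int.
case: c => m.
  elim: m => [|n IH]; first by rewrite !mulr0z fglift0.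
  by rewrite -!(addn1 n) !PoszD !mulrzDr !mulr1z fgliftD IH.
rewrite !NegzE !mulrNz.
rewrite fgliftN; congr (- _).
elim: m.+1 => [|n IH]; first by rewrite !mulr0z fglift0.
by rewrite -!(addn1 n) !PoszD !mulrzDr !mulr1z fgliftD IH.
Qed.

Lemma fglift_expand (K : choiceType) (M : lmodType int) (f : K -> M) x :
  fglift f x = \sum_(z <- dom x) coeff z x *: f z.
Proof.
rewrite -{1}[x]freeg_sumE fglift_sum; apply: eq_bigr => z _; exact: liftU.
Qed.

Lemma eq_fglift_in (K : choiceType) (M : lmodType int) (f g : K -> M) x :
  (forall k, k \in dom x -> f k = g k) -> fglift f x = fglift g x.
Proof.
move=> H; rewrite !fglift_expand big_seq [RHS]big_seq.
by apply: eq_bigr => z zi; rewrite H.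
Qed.

Lemma fglift_comp (K1 K2 : choiceType) (M : lmodType int) (f : K1 -> FZ K2) (g : K2 -> M) x :
  fglift g (fglift f x) = fglift (fun k => fglift g (f k)) x.
Proof.
rewrite [fglift f x]fglift_expand fglift_sum [RHS]fglift_expand.
by apply: eq_bigr => z _; rewrite fgliftMz.
Qed.

End FG.

Definition ib (w : word) : scomp := map (fun x => [fset x]) w.

Lemma ib_inj : injective ib.
Proof. apply: inj_map => x y /fsetP /(_ x); rewrite !inE eqxx. by move=> H; apply/eqP; rewrite -H. Qed.

Lemma coeff_iotaL w x : coeff (ib w) (iotaL x) = coeff w x.
Proof.
rewrite /coeff /iotaL /lin fglift_comp; apply: (@eq_fglift_in _ int^o) => k _.
by rewrite /iota_b fglift_bas (inj_eq ib_inj).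
Qed.

Lemma part_inj (x y : FZ word) : iotaL x = iotaL y -> x = y.
Proof.
move=> H; apply/eqP/freeg_eqP => w; by rewrite -!coeff_iotaL H.
Qed.

Lemma cdeg_ib a : cdeg (ib a) = size a.
Proof.
rewrite /cdeg /ib big_map; under eq_bigr do rewrite cardfs1; exact: sum1_size.
Qed.

Lemma fset1_neq0 (x : nat) : [fset x] != fset0.
Proof. by apply/eqP => /fsetP /(_ x); rewrite !inE eqxx. Qed.

Lemma im1 (f : nat -> nat) x : [fset f y | y in [fset x]] = [fset f x].
Proof. exact: imfset_fset1. Qed.

Lemma crestr_ib a S : crestr (ib a) S = ib (wis S (wrestr a S)).
Proof.
elim: a => // x a IH; move: IH; rewrite /crestr /= fsetIC fsetI1.
case xS: (x \in S) => /=; last by [].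
by rewrite fset1_neq0 /= im1 => ->.
Qed.

Lemma card_fiota n : #|` fiota n| = n.
Proof.
have -> : fiota n = [fset x in iota 1 n] by [].
by rewrite card_fseq undup_id ?iota_uniq // size_iota.
Qed.

Lemma mem_fiota n x : (x \in fiota n) = (0 < x <= n).
Proof. by rewrite /fiota /fint !inE mem_iota add1n ltnS. Qed.

Lemma rank_fiota i x : x \in fiota i -> rank (fiota i) x = x.
Proof.
rewrite mem_fiota => /andP[x0 xi]; rewrite /rank -[RHS]card_fiota; congr #|` _|.
apply/fsetP => y; rewrite !inE /= !mem_iota !add1n !ltnS.
apply/idP/idP.
  by case/andP => /andP[-> _] ->.
by case/andP => -> yx /=; rewrite yx (leq_trans yx xi).
Qed.

Lemma wis_fiota i a : wis (fiota i) (wrestr a (fiota i)) = wrestr a (fiota i).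
Proof.
rewrite /wis -[RHS]map_id; apply/eq_in_map => y.
by rewrite /wrestr mem_filter => /andP[yI _]; exact: rank_fiota.
Qed.

Lemma crelab_ib S T a : crelab S T (ib a) = ib (map (relab S T) a).
Proof. by rewrite /crelab /ib -!map_comp; apply: eq_map => x /=; rewrite im1. Qed.

Lemma ib_cat a b : ib (a ++ b) = ib a ++ ib b.
Proof. exact: map_cat. Qed.

Lemma iota_bE a : iota_b a = bas (ib a).
Proof. by []. Qed.

Lemma iotaL_bas a : iotaL (bas a) = bas (ib a).
Proof. by rewrite /iotaL /lin fglift_bas. Qed.

Lemma iotaL_sum (I : Type) (r : seq I) (P : pred I) (F : I -> FZ word) :
  iotaL (\sum_(i <- r | P i) F i)%R = (\sum_(i <- r | P i) iotaL (F i))%R.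
Proof. exact: fglift_sum. Qed.

Lemma bilin_iota (m1 : word -> word -> FZ word) (m2 : scomp -> scomp -> FZ scomp) x y :
  (forall a b, a \in dom x -> b \in dom y -> iotaL (m1 a b) = m2 (ib a) (ib b)) ->
  iotaL (bilin m1 x y) = bilin m2 (iotaL x) (iotaL y).
Proof.
move=> H; rewrite /bilin /iotaL /lin !fglift_comp.
apply: (@eq_fglift_in _ (FreegDefs_type_of__canonical__GRing_Lmodule _ scomp)) => a ax; rewrite fglift_bas !fglift_comp.
apply: (@eq_fglift_in _ (FreegDefs_type_of__canonical__GRing_Lmodule _ _)) => b bx; rewrite fglift_bas; exact: H.
Qed.

Lemma tens_bas (u v : word) : tens iota_b iota_b (bas (u, v)) = bas (ib u, ib v).
Proof. by rewrite /tens fglift_bas /= /bilin !fglift_bas. Qed.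

Lemma tens_sum (I : Type) (r : seq I) (P : pred I) (F : I -> FZ (word * word)%type) :
  tens iota_b iota_b (\sum_(i <- r | P i) F i)%R = (\sum_(i <- r | P i) tens iota_b iota_b (F i))%R.
Proof. exact: fglift_sum. Qed.

Lemma coprod_iota (D1 : word -> FZ (word * word)%type) (D2 : scomp -> FZ (scomp * scomp)%type) x :
  (forall a, a \in dom x -> tens iota_b iota_b (D1 a) = D2 (ib a)) ->
  tens iota_b iota_b (lin D1 x) = lin D2 (iotaL x).
Proof.
move=> H; rewrite /tens /lin /iotaL !fglift_comp.
apply: (@eq_fglift_in _ (FreegDefs_type_of__canonical__GRing_Lmodule _ _)) => a ax; rewrite fglift_bas; exact: H.
Qed.

Lemma wcross_ib a b : iotaL (wcross a b) = cbar (ib a) (ib b).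
Proof.
rewrite /wcross iotaL_bas /cbar cdeg_ib ib_cat; congr (bas (_ ++ _)).
by rewrite /ib -!map_comp; apply: eq_map => y /=; rewrite im1.
Qed.

Lemma wdhat_ib a : tens iota_b iota_b (wdhat a) = cdhat (ib a).
Proof.
rewrite /wdhat /cdhat tens_sum cdeg_ib; apply: eq_bigr => S _.
by rewrite tens_bas !crestr_ib.
Qed.

Lemma wdbar_ib a : tens iota_b iota_b (wdbar a) = cdbar (ib a).
Proof.
rewrite /wdbar /cdbar tens_sum cdeg_ib; apply: eq_bigr => i _.
by rewrite tens_bas !crestr_ib wis_fiota.
Qed.

Lemma mem_perm_word a x : is_perm_word a -> x \in a -> 0 < x <= size a.
Proof.
by move=> /perm_mem -> ; rewrite mem_iota add1n ltnS.
Qed.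

Lemma wstar_ib a b : is_perm_word a -> is_perm_word b ->
  iotaL (wstar a b) = chat (ib a) (ib b).
Proof.
move=> pa pb.
rewrite /wstar /chat /gmul /bilin /wcross !cdeg_ib /qnm.
rewrite fglift_sum iotaL_sum; apply: eq_bigr => A /eqP hA.
rewrite !fglift_bas /wcomp iotaL_bas !crelab_ib -ib_cat; congr (bas (ib _)).
rewrite map_cat; congr (_ ++ _).
  apply/eq_in_map => x xa /=.
  have /andP[x0 xn] := mem_perm_word pa xa.
  rewrite /relab rank_fiota ?mem_fiota ?x0 ?xn // nth_cat size_sort.
  by rewrite hA; case: (x) x0 xn => //= n _ ->.
rewrite -map_comp; apply/eq_in_map => y yb /=.
have /andP[y0 ym] := mem_perm_word pb yb.
rewrite /relab rank_fiota ?mem_fiota ?y0 ?ym // nth_cat size_sort.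
have -> : ((size a + y).-1 = size a + y.-1)%N by case: (y) y0 => //= n _; rewrite addnS.
by rewrite -hA /= ltnNge leq_addr /= addKn.
Qed.

Theorem theorem4p4 :
  (* injectivity on S_bullet *)
  (forall x y : FZ word, inS x -> inS y -> iotaL x = iotaL y -> x = y) /\
  (* unit and counit (common to both structures) *)
  iotaL unitS = unitT /\
  (forall x : FZ word, inS x -> counitT (iotaL x) = counitS x) /\
  (* (1) enveloping-algebra structures *)
  (forall x y : FZ word, inS x -> inS y ->
     iotaL (bilin wcross x y) = bilin cbar (iotaL x) (iotaL y)) /\
  (forall x : FZ word, inS x ->
     tens iota_b iota_b (lin wdhat x) = lin cdhat (iotaL x)) /\
  (* (2) Malvenuto--Reutenauer structures *)
  (forall x y : FZ word, inS x -> inS y ->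
     iotaL (bilin wstar x y) = bilin chat (iotaL x) (iotaL y)) /\
  (forall x : FZ word, inS x ->
     tens iota_b iota_b (lin wdbar x) = lin cdbar (iotaL x)).
Proof.
split; first by move=> x y _ _; exact: part_inj.
split; first by rewrite /unitS /unitT iotaL_bas.
split; first by move=> x _; rewrite /counitT /counitS; exact: (coeff_iotaL [::] x).
split; first by move=> x y _ _; apply: bilin_iota => a b _ _; exact: wcross_ib.
split; first by move=> x _; apply: coprod_iota => a _; exact: wdhat_ib.
split; last by move=> x _; apply: coprod_iota => a _; exact: wdbar_ib.
move=> x y hx hy; apply: bilin_iota => a b ha hb.
by apply: wstar_ib; [exact: (allP hx) | exact: (allP hy)].
Qed.
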